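(* Let $m\ge 3$ and $n\ge 5$ be integers, let $\Gamma=C_m\Box C_n$ with vertex set $\{0,\dots,m-1\}\times\{0,\dots,n-1\}$, and let $S$ be a disjunctive dominating set of $\Gamma$. For $j\in\mathbb Z$ let $x_j=|S\cap T_j|$, where $T_j=\{(i,j')\,:\,0\le i\le m-1\}$ with $j'\equiv j\pmod n$, $0\le j'\le n-1$ (so indices are read modulo $n$). Then for every $j=0,1,\dots,n-1$, $$x_{j-2}+4x_{j-1}+8x_j+4x_{j+1}+x_{j+2}\ge 2m.$$
   Context: $C_k$ denotes the cycle with vertex set $\{0,\dots,k-1\}$, where $i,j$ are adjacent iff $i-j\equiv\pm1\pmod k$. $G\Box H$ is the Cartesian product: vertex set $V(G)\times V(H)$, with $(g,h)\sim(g',h')$ iff either $g=g'$ and $hh'\in E(H)$, or $h=h'$ and $gg'\in E(G)$. For a graph $\Gamma$ and vertex $v$, $\Gamma(v)$ is the set of vertices at distance $1$ from $v$ and $\Gamma_2(v)$ the set at distance exactly $2$. A set $S\subseteq V(\Gamma)$ is a disjunctive dominating set if every vertex $v\notin S$ satisfies $|\Gamma(v)\cap S|\ge 1$ or $|\Gamma_2(v)\cap S|\ge 2$. *)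

(* Defs.v *)
From mathcomp Require Import all_boot all_order all_algebra.
Set Implicit Arguments. Unset Strict Implicit. Unset Printing Implicit Defensive.

Definition cyc_adj (k : nat) : rel 'I_k :=
  fun i j => (val i == (val j).+1 %% k) || (val j == (val i).+1 %% k).

Definition cart_adj (U V : finType) (e1 : rel U) (e2 : rel V) : rel (U * V) :=
  fun x y => ((x.1 == y.1) && e2 x.2 y.2) || ((x.2 == y.2) && e1 x.1 y.1).

Definition torus_adj (m n : nat) : rel ('I_m * 'I_n) :=
  cart_adj (@cyc_adj m) (@cyc_adj n).

Definition nbr1 (T : finType) (e : rel T) (v : T) : {set T} :=
  [set w | e v w].

Definition nbr2 (T : finType) (e : rel T) (v : T) : {set T} :=
  [set w | [&& w != v, ~~ e v w & [exists u, e v u && e u w]]].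

Definition disjunctive_dominating (T : finType) (e : rel T) (S : {set T}) : Prop :=
  forall v, v \notin S ->
    (1 <= #|nbr1 e v :&: S|) || (2 <= #|nbr2 e v :&: S|).

Definition colcount (m n : nat) (S : {set 'I_m * 'I_n}) (j : int) : nat :=
  #|[set v in S | val v.2 == absz (j %% n)%Z]|.

(* Main.v *)
Require Import Defs.
From mathcomp Require Import all_boot all_order all_algebra.
From mathcomp Require Import zify ring.
Set Implicit Arguments. Unset Strict Implicit.
Import GRing.Theory Num.Theory.
Local Open Scope ring_scope.

Definition cz k (x : 'I_k) (t : int) : 'I_k := insubd x (absz (t %% k)%Z).
Definition eqm (k : nat) (t u : int) : Prop := ((k%:Z) %| (t - u)%R)%Z.

Lemma cz_val k (x : 'I_k) t : val (cz x t) = absz (t %% k)%Z.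
Proof.
have k0 : (0 < k)%N by apply: leq_ltn_trans (ltn_ord x).
rewrite val_insubd.
have -> : (absz (t %% k)%Z < k)%N.
  have h1 := @ltz_pmod t k%:Z.
  have h2 := @modz_ge0 t k%:Z.
  rewrite -ltz_nat gez0_abs ?h1 ?h2 //; rewrite ?ltz_nat // -lt0n //.
done.
Qed.

Lemma cz_eq k (x y : 'I_k) t : (y == cz x t) = ((k%:Z) %| (y%:Z - t)%R)%Z.
Proof.
have k0 : (0 < k)%N by apply: leq_ltn_trans (ltn_ord x).
rewrite -eqz_mod_dvd -val_eqE cz_val.
have hge := @modz_ge0 t k%:Z.
rewrite (@modz_small y%:Z); last by apply/andP; split; [done | rewrite ltz_nat ltn_ord].
have kn : k != 0%N by rewrite -lt0n.
by move: (hge kn); case: (t %% k)%Z => // n _ /=.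
Qed.

Lemma dvd_mod_sub (k : nat) (t : int) : ((k%:Z) %| ((t %% k)%Z - t)%R)%Z.
Proof.
have -> : ((t %% k)%Z - t) = - ((t %/ k)%Z * k%:Z) by rewrite {2}(divz_eq t k); ring.
rewrite rpredN.
by apply: dvdz_mull.
Qed.

Lemma eqm_cz k (x y : 'I_k) t : eqm k y%:Z t -> y = cz x t.
Proof. by rewrite /eqm -(cz_eq x) => /eqP. Qed.

Lemma eqm_trans k x y z c d : eqm k x (y + c) -> eqm k y (z + d) -> eqm k x (z + (c + d)).
Proof.
rewrite /eqm => h1 h2.
have -> : x - (z + (c + d)) = (x - (y + c)) + (y - (z + d)) by ring.
exact: rpredD.
Qed.

Lemma eqm_sym k x y c : eqm k x (y + c) -> eqm k y (x + - c).
Proof.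
rewrite /eqm => h.
have -> : y - (x + - c) = - (x - (y + c)) by ring.
by rewrite rpredN.
Qed.

Lemma cyc_eqm k (a b : 'I_k) : cyc_adj a b -> eqm k a%:Z (b%:Z + 1) \/ eqm k a%:Z (b%:Z + -1).
Proof.
rewrite /cyc_adj => /orP [/eqP h | /eqP h].
  left; rewrite /eqm h -modz_nat.
  have -> : ((b.+1)%N%:Z) = b%:Z + 1 by rewrite -addn1 PoszD.
  exact: dvd_mod_sub.
right; apply: (@eqm_sym k b%:Z a%:Z 1).
rewrite /eqm h -modz_nat.
have -> : ((a.+1)%N%:Z) = a%:Z + 1 by rewrite -addn1 PoszD.
exact: dvd_mod_sub.
Qed.

Lemma cyc_sym k (a b : 'I_k) : cyc_adj a b = cyc_adj b a.
Proof. by rewrite /cyc_adj orbC. Qed.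

Lemma eqm_refl k x : eqm k x (x + 0).
Proof. by rewrite /eqm addr0 subrr dvdz0. Qed.

Lemma two_eq : (1 + 1 : int) = 2. Proof. by []. Qed.
Lemma mtwo_eq : (-1 + -1 : int) = - 2. Proof. by []. Qed.
Lemma pm_eq : (1 + -1 : int) = 0. Proof. by []. Qed.
Lemma mp_eq : (-1 + 1 : int) = 0. Proof. by []. Qed.

Lemma cyc_row k (a b : 'I_k) : cyc_adj a b -> (a == cz b (b%:Z + 1)) || (a == cz b (b%:Z - 1)).
Proof.
case/cyc_eqm => h; apply/orP; [left|right]; apply/eqP; exact: eqm_cz.
Qed.

Lemma r2_row k (a b a' : 'I_k) : a != b -> cyc_adj a a' -> cyc_adj a' b ->
  (a == cz b (b%:Z + 2)) || (a == cz b (b%:Z - 2)).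
Proof.
move=> hne /cyc_eqm h1 /cyc_eqm h2.
have hb : b = cz b (b%:Z + 0) by apply: eqm_cz; exact: eqm_refl.
case: h1 => h1; case: h2 => h2; have := eqm_trans h1 h2;
  rewrite ?two_eq ?mtwo_eq ?pm_eq ?mp_eq => h.
- by apply/orP; left; apply/eqP; apply: eqm_cz.
- by move: hne; rewrite (eqm_cz b h) -hb eqxx.
- by move: hne; rewrite (eqm_cz b h) -hb eqxx.
- by apply/orP; right; apply/eqP; apply: eqm_cz.
Qed.

Definition d2c n (j k : 'I_n) : bool :=
  [&& k != j, ~~ cyc_adj j k & [exists l, cyc_adj j l && cyc_adj l k]].
Definition r2 m (a b : 'I_m) : bool := (a != b) && [exists a', cyc_adj a a' && cyc_adj a' b].

Lemma nbr2_cases m n (a b : 'I_m) (j k : 'I_n) :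
  (b, k) \in nbr2 (@torus_adj m n) (a, j) ->
  [|| (a == b) && d2c j k, cyc_adj a b && cyc_adj j k | (k == j) && r2 a b].
Proof.
rewrite inE => /and3P [hne hnadj /existsP [[a' l] /andP [h1 h2]]].
move: hne hnadj h1 h2; rewrite /torus_adj /cart_adj /= xpair_eqE.
move=> hne hnadj.
case/orP => /andP [/eqP e1 c1]; case/orP => /andP [/eqP e2 c2]; subst.
- apply/orP; left; rewrite eqxx /d2c /=.
  move: hne hnadj; rewrite eqxx /= => hne /norP [hn _].
  apply/and3P; split => //; apply/existsP; exists l; by rewrite c1 c2.
- by rewrite c1 c2 orbT.
- by rewrite c1 c2 orbT.
- apply/orP; right; apply/orP; right; rewrite eqxx /r2 /=.
  move: hne; rewrite eqxx andbT eq_sym => hne; apply/andP; split => //; apply/existsP; exists a'; by rewrite c1 c2.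
Qed.

Lemma sum_eq1 (T : finType) (x : T) : (\sum_(a : T) (a == x : nat) = 1)%N.
Proof. by rewrite (bigD1 x) //= eqxx big1 // => i /negbTE ->. Qed.

Lemma sum_eqc (T : finType) (x : T) (c : bool) : (\sum_(a : T) ((a == x) && c : nat) = c)%N.
Proof.
case: c; last by rewrite big1 // => i _; rewrite andbF.
transitivity (\sum_(a : T) (a == x : nat))%N; last exact: sum_eq1.
by apply: eq_bigr => i _; rewrite andbT.
Qed.

Lemma sum_le2 (T : finType) (P : pred T) (x1 x2 : T) (c : bool) :
  (forall a, P a -> (a == x1) || (a == x2)) -> (\sum_(a : T) (c && P a : nat) <= 2 * c)%N.
Proof.
move=> hP; case: c; last by rewrite big1.
apply: (@leq_trans (\sum_(a : T) ((a == x1 : nat) + (a == x2 : nat)))%N).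
  apply: leq_sum => a _ /=; case h: (P a) => //=.
  by case/orP: (hP a h) => ->; rewrite ?addn1 ?add1n.
by rewrite big_split /= !sum_eq1.
Qed.

Lemma col_bound m n (b : 'I_m) (j k : 'I_n) :
  (\sum_(a : 'I_m) (2 * ((a, j) == (b, k)) + 2 * ((b, k) \in nbr1 (@torus_adj m n) (a, j))
      + ((b, k) \in nbr2 (@torus_adj m n) (a, j)))
   <= 8 * (k == j) + 4 * cyc_adj j k + d2c j k)%N.
Proof.
apply: (@leq_trans (\sum_(a : 'I_m) (2 * ((a == b) && (k == j))
   + 2 * (((a == b) && cyc_adj j k) + ((k == j) && cyc_adj a b))
   + (((a == b) && d2c j k) + ((cyc_adj j k) && cyc_adj a b) + ((k == j) && r2 a b))))%N).
  apply: leq_sum => a _.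
  apply: leq_add; [apply: leq_add|].
  - by rewrite xpair_eqE [j == k]eq_sym.
  - rewrite leq_mul2l /= inE /torus_adj /cart_adj /= [j == k]eq_sym.
    by case: (_ && _); case: (_ && _).
  - case h: (_ \in _) => //.
    move: (nbr2_cases h); rewrite [cyc_adj a b && _]andbC.
    by case: ((a == b) && _); case: (_ && _); case: (_ && _).
rewrite !big_split /= !sum_eqc big1_eq.
have H1 := @sum_le2 _ (fun a => cyc_adj a b) (cz b (b%:Z + 1)) (cz b (b%:Z - 1)) (k == j) (fun a => @cyc_row _ a b).
have H2 := @sum_le2 _ (fun a => cyc_adj a b) (cz b (b%:Z + 1)) (cz b (b%:Z - 1)) (cyc_adj j k) (fun a => @cyc_row _ a b).
have H3 := @sum_le2 _ (fun a => r2 a b) (cz b (b%:Z + 2)) (cz b (b%:Z - 2)) (k == j)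
   (fun a h => let: conj h1 h2 := andP h in
      let: ex_intro a' h3 := existsP h2 in let: conj h4 h5 := andP h3 in r2_row h1 h4 h5).
case: (k == j) H1 H3; case: (cyc_adj j k) H2; case: (d2c j k); rewrite /= => H2 H1 H3; lia.
Qed.

Lemma sum_pred (T : finType) (S : {set T}) (P : pred T) :
  (\sum_(s in S) (P s : nat))%N = #|[set v in S | P v]|.
Proof.
rewrite -sum1_card [LHS]big_mkcond [RHS]big_mkcond /=.
by apply: eq_bigr => s _; rewrite inE; case: (s \in S); case: (P s).
Qed.

Definition wgt (T : finType) (e : rel T) (v s : T) : nat :=
  (2 * (v == s) + 2 * (s \in nbr1 e v) + (s \in nbr2 e v))%N.

Lemma vertex_bound (T : finType) (e : rel T) (S : {set T}) :
  disjunctive_dominating e S -> forall v, (2 <= \sum_(s in S) wgt e v s)%N.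
Proof.
move=> DD v; case: (boolP (v \in S)) => hv.
  rewrite (bigD1 v) //= /wgt eqxx /=.
  by apply: leq_trans (leq_addr _ _); rewrite -addnA leq_addr.
have card_sum (X : {set T}) : (\sum_(s in S) (s \in X : nat))%N = #|X :&: S|.
  rewrite (sum_pred S (fun s => s \in X)); apply: eq_card => x.
  by rewrite !inE andbC.
case/orP: (DD v hv) => h.
  apply: (@leq_trans (\sum_(s in S) 2 * (s \in nbr1 e v))%N).
    by rewrite -big_distrr /= card_sum; move: h; lia.
  by apply: leq_sum => s _; rewrite /wgt -addnA addnCA leq_addr.
apply: (@leq_trans (\sum_(s in S) (s \in nbr2 e v : nat))%N).
  by rewrite card_sum.
by apply: leq_sum => s _; rewrite /wgt leq_addl.
Qed.

Local Close Scope ring_scope.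

Theorem lemma1 (m n : nat) (S : {set 'I_m * 'I_n}) :
  3 <= m -> 5 <= n ->
  disjunctive_dominating (@torus_adj m n) S ->
  forall j : 'I_n,
    (colcount S (j%:Z - 2)%R + 4 * colcount S (j%:Z - 1)%R + 8 * colcount S j%:Z
     + 4 * colcount S (j%:Z + 1)%R + colcount S (j%:Z + 2)%R >= 2 * m)%N.
Proof.
move=> hm hn DD j.
have Hcol t : colcount S t = (\sum_(s in S) (s.2 == cz j t))%N.
  rewrite /colcount -sum_pred; apply: eq_bigr => s _.
  by rewrite -val_eqE cz_val.
have ej : cz j j%:Z = j by symmetry; apply: eqm_cz; rewrite /eqm subrr dvdz0.
rewrite !Hcol ej.
apply: (@leq_trans (\sum_(a : 'I_m) \sum_(s in S) wgt (@torus_adj m n) (a, j) s)%N).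
  have -> : (2 * m = \sum_(a : 'I_m) 2)%N by rewrite sum_nat_const card_ord mulnC.
  by apply: leq_sum => a _; apply: vertex_bound.
rewrite exchange_big /=.
apply: (@leq_trans (\sum_(s in S) ((s.2 == cz j (j%:Z - 2)%R) + 4 * (s.2 == cz j (j%:Z - 1)%R)
   + 8 * (s.2 == j) + 4 * (s.2 == cz j (j%:Z + 1)%R) + (s.2 == cz j (j%:Z + 2)%R)))%N); last first.
  rewrite !big_split /= !big1_eq; lia.
apply: leq_sum => [[b k]] _ /=.
apply: leq_trans (col_bound b j k) _.
have hc : (cyc_adj j k <= (k == cz j (j%:Z + 1)%R) + (k == cz j (j%:Z - 1)%R))%N.
  case h: (cyc_adj j k) => //.
  rewrite cyc_sym in h; case/orP: (cyc_row h) => ->; by rewrite ?addn1 ?add1n.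
have hd : (d2c j k <= (k == cz j (j%:Z + 2)%R) + (k == cz j (j%:Z - 2)%R))%N.
  case h: (d2c j k) => //.
  case/and3P: h => h1 _ /existsP [l /andP [c1 c2]].
  rewrite cyc_sym in c1; rewrite cyc_sym in c2.
  case/orP: (r2_row h1 c2 c1) => ->; by rewrite ?addn1 ?add1n.
move: hc hd; case: (k == j); case: (cyc_adj j k); case: (d2c j k); case: (k == cz j _); case: (k == cz j _); case: (k == cz j _); case: (k == cz j _); by [].
Qed.
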